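(* Consider a market with $n$ buyers, $m$ items and $T$ time periods, where item $j$ has per-period supply $s_j^t\ge 0$ and overall supply $s_j\ge 0$. Every buyer has budget $B_i=1$ and binary valuations $v_{ij}\in\{0,1\}$, and buyer $i$ has per-period demands $d_i^t\ge0$ with $d_i=\sum_t d_i^t$. A feasible allocation is $x=(x_{ij}^t)\ge 0$ with $\sum_i x_{ij}^t\le s_j^t$ for all $j,t$ and $\sum_{t,i}x_{ij}^t\le s_j$ for all $j$; buyer $i$'s utility is $u_i(x_i)=\sum_j v_{ij}\sum_t x_{ij}^t-d_i$. Assume there is a feasible allocation with $u_i(x_i)>0$ for all $i$. Then the set of leximin-optimal feasible allocations coincides with the set of maximum Nash welfare allocations, i.e. the optimal solutions of $$\max_{x\ge 0}\sum_i\log\Big(\sum_j v_{ij}\sum_t x_{ij}^t-d_i\Big)\ \text{ over feasible allocations}.$$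
   Context: Leximin order: for $v,\tilde v\in\mathbb{R}^n$ with nondecreasing rearrangements $v^*,\tilde v^*$, $v$ is leximin-greater than $\tilde v$ if there is $k$ with $v^*_i=\tilde v^*_i$ for $i<k$ and $v^*_k>\tilde v^*_k$. A feasible allocation $x$ is leximin-optimal if no feasible $\tilde x$ has $(u_i(\tilde x_i))_i$ leximin-greater than $(u_i(x_i))_i$. *)

(* Defs.v *)
From HB Require Import structures.
From mathcomp Require Import all_boot all_order all_algebra.
From mathcomp Require Import all_classical all_reals.
From mathcomp Require Import exp.
Set Implicit Arguments. Unset Strict Implicit. Unset Printing Implicit Defensive.
Import Order.TTheory GRing.Theory Num.Theory.
Local Open Scope ring_scope.

Section Market.
Variable R : realType.
Variables (n m T : nat).

Definition alloc := 'I_n -> 'I_m -> 'I_T -> R.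

Definition feasible (s : 'I_m -> 'I_T -> R) (S : 'I_m -> R) (x : alloc) : Prop :=
  (forall i j t, 0 <= x i j t) /\
  (forall j t, \sum_(i < n) x i j t <= s j t) /\
  (forall j, \sum_(t < T) \sum_(i < n) x i j t <= S j).

Definition total_demand (d : 'I_n -> 'I_T -> R) (i : 'I_n) : R :=
  \sum_(t < T) d i t.

Definition utility (v : 'I_n -> 'I_m -> R) (d : 'I_n -> 'I_T -> R)
  (x : alloc) (i : 'I_n) : R :=
  \sum_(j < m) v i j * (\sum_(t < T) x i j t) - total_demand d i.

Definition sorted_vec (u : 'I_n -> R) : seq R :=
  sort <=%R [seq u i | i <- enum 'I_n].

Definition leximin_gt (u w : 'I_n -> R) : Prop :=
  exists k : 'I_n,
    (forall i : 'I_n, (i < k)%N -> nth 0 (sorted_vec u) i = nth 0 (sorted_vec w) i) /\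
    nth 0 (sorted_vec w) k < nth 0 (sorted_vec u) k.

Definition leximin_optimal s S v d (x : alloc) : Prop :=
  feasible s S x /\
  forall y : alloc, feasible s S y -> ~ leximin_gt (utility v d y) (utility v d x).

(* Maximum Nash welfare: maximizer of sum_i log u_i over feasible allocations,
   with log of a nonpositive number read as -oo (so a maximizer has all u_i > 0
   and only competitors with all u_i > 0 matter). *)
Definition max_nash_welfare s S v d (x : alloc) : Prop :=
  feasible s S x /\ (forall i, 0 < utility v d x i) /\
  forall y : alloc, feasible s S y -> (forall i, 0 < utility v d y i) ->
    \sum_(i < n) ln (utility v d y i) <= \sum_(i < n) ln (utility v d x i).

End Market.

(* Main.v *)
Require Import Defs.
From HB Require Import structures.
From mathcomp Require Import all_boot all_order all_algebra.
From mathcomp Require Import all_classical all_reals.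
From mathcomp Require Import exp.
From mathcomp Require Import ring lra.
Import Order.TTheory GRing.Theory Num.Theory.
Local Open Scope ring_scope.

Lemma card_count (n : nat) (P : pred 'I_n) : #|[set i | P i]| = count P (enum 'I_n).
Proof. rewrite cardsE cardE /enum_mem size_filter /enum_mem (@eq_filter _ _ predT) // filter_predT. by apply: eq_count. Qed.

Lemma sorted_nth_lt (R : realDomainType) (t : R) (s : seq R) :
  sorted <=%R s -> forall k, (k < size s)%N ->
  (t < nth 0 s k) = (count (fun x => (x <= t)%R) s <= k)%N.
Proof.
elim: s => [|x s IH] //= Hs k Hk.
have Hall : all (fun y => x <= y) s by apply: (order_path_min (@le_trans _ _)).
have Hs' : sorted <=%R s by apply: (path_sorted Hs).
have Hnone : t < x -> count (fun y => (y <= t)%R) s = 0%N.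
  move=> Htx; apply/eqP; rewrite -leqn0 leqNgt -has_count; apply/hasPn => y Hy.
  by rewrite -ltNge; exact: lt_le_trans Htx (allP Hall y Hy).
case: k Hk => [|k] Hk /=.
- case: leP => /= Hxt; first by rewrite add1n.
  by rewrite add0n Hnone.
- rewrite ltnS in Hk; rewrite (IH Hs' k Hk).
  case: leP => /= Hxt; first by rewrite add1n ltnS.
  by rewrite add0n Hnone // leq0n.
Qed.

Section Sorting.
Variable R : realType.
Variable n : nat.

Definition Cnt (f : 'I_n -> R) (t : R) : nat := #|[set i | f i <= t]|.

Lemma Klem (f : 'I_n -> R) (k : nat) (t : R) : (k < n)%N ->
  (t < nth 0 (sorted_vec f) k) = (Cnt f t <= k)%N.
Proof.
move=> hk; rewrite /sorted_vec sorted_nth_lt.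
- by rewrite count_sort count_map /Cnt card_count.
- by apply: sort_sorted; exact: le_total.
- by rewrite size_sort size_map size_enum_ord.
Qed.

Lemma Keq (f g : 'I_n -> R) (k : nat) : (k < n)%N ->
  (forall t, (Cnt f t <= k)%N = (Cnt g t <= k)%N) ->
  nth 0 (sorted_vec f) k = nth 0 (sorted_vec g) k.
Proof.
move=> hk H; set p := nth 0 _ k; set q := nth 0 _ k.
case: (ltgtP p q) => // Hpq.
- have := Hpq; rewrite /q Klem // -H -Klem //; by rewrite ltxx.
- have := Hpq; rewrite /p Klem // H -Klem //; by rewrite ltxx.
Qed.

Lemma Cnt_mono (f : 'I_n -> R) t t' : t' <= t -> (Cnt f t' <= Cnt f t)%N.
Proof.
move=> Ht; apply: subset_leq_card; apply/fintype.subsetP => j; rewrite !inE => h.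
exact: le_trans h Ht.
Qed.

Lemma LexUp (f g : 'I_n -> R) (a : 'I_n) : f a < g a ->
  (forall i, i != a -> g i = f i \/ (f a < f i /\ f a < g i)) ->
  leximin_gt g f.
Proof.
move=> Ha H.
set K := Cnt f (f a).
have HaK : a \in [set i | f i <= f a] by rewrite inE.
have HK : Cnt g (f a) = K.-1.
  rewrite /K /Cnt [in RHS](cardsD1 a) HaK add1n /=.
  suff -> : [set i | g i <= f a] = [set i | f i <= f a] :\ a by [].
  apply/finset.setP => j; rewrite !inE; case: (eqVneq j a) => [->|ne] /=; first by rewrite leNgt Ha.
  case: (H j ne) => [->|[h1 h2]] //.
  by rewrite leNgt h2 leNgt h1.
have K0 : (0 < K)%N by rewrite /K /Cnt (cardsD1 a) HaK.
have Kn : (K <= n)%N.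
  by apply: leq_trans (max_card _) _; rewrite card_ord.
have hk : (K.-1 < n)%N by rewrite prednK.
exists (Ordinal hk); split.
- move=> i /= Hi; apply: Keq; first exact: ltn_ord.
  move=> t; case: (ltP t (f a)) => Ht.
  + rewrite /Cnt.
    suff -> : [set i | g i <= t] = [set i | f i <= t] by [].
    apply/finset.setP => j; rewrite !inE.
    case: (eqVneq j a) => [->|ne].
      by rewrite !leNgt Ht (lt_trans Ht Ha).
    case: (H j ne) => [->|[h1 h2]] //.
    by rewrite !leNgt (lt_trans Ht h1) (lt_trans Ht h2).
  + have h1 : (K <= Cnt f t)%N by apply: Cnt_mono.
    have h2 : (K.-1 <= Cnt g t)%N by rewrite -HK; apply: Cnt_mono.
    have h3 : (i < K)%N by apply: (ltn_trans Hi); rewrite ltn_predL.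
    have -> : (Cnt f t <= i)%N = false by rewrite leqNgt (leq_trans h3 h1).
    have -> : (Cnt g t <= i)%N = false by rewrite leqNgt (leq_trans Hi h2).
    by [].
- rewrite /=.
  have e1 : f a < nth 0 (sorted_vec g) K.-1 by rewrite Klem // HK.
  have e2 : nth 0 (sorted_vec f) K.-1 <= f a.
    by rewrite leNgt Klem // -/K -ltnNge ltn_predL.
  exact: le_lt_trans e2 e1.
Qed.
End Sorting.
Arguments Cnt {R n} f t.
Arguments Klem {R n} f k t.


Lemma Wlem (R : realType) (n : nat) (phi delta : 'I_n -> R) :
  (forall i, 0 <= phi i) -> (forall t, \sum_(i | t <= phi i) delta i <= 0) ->
  \sum_i delta i * phi i <= 0.
Proof.
move=> H0 H1.
suff: forall k (phi : 'I_n -> R), (#|[set i | (0 < phi i)%R]| <= k)%N ->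
  (forall i, 0 <= phi i) -> (forall t, \sum_(i | t <= phi i) delta i <= 0) ->
  \sum_i delta i * phi i <= 0 by move=> /(_ _ phi (leqnn _)); apply.
clear phi H0 H1.
elim=> [|k IH] phi Hk H0 H1.
- rewrite big1 // => i _.
  have : i \notin [set i | 0 < phi i].
    by apply/negP => Hi; move: Hk; rewrite leqn0 => /eqP/cards0_eq/finset.setP/(_ i); rewrite Hi inE.
  rewrite inE => Hi; have -> : phi i = 0 by apply/eqP; rewrite eq_le H0 andbT leNgt.
  by rewrite mulr0.
- case: (pickP [pred i | 0 < phi i]) => [i0 Hi0 | none]; last first.
    rewrite big1 // => i _; have := none i; rewrite /= => Hi.
    have -> : phi i = 0 by apply/eqP; rewrite eq_le H0 andbT leNgt Hi.
    by rewrite mulr0.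
  set im := [arg min_(i < i0 | (0 < phi i)%R) phi i]%O.
  have [Him Hmin] : 0 < phi im /\ forall j, 0 < phi j -> phi im <= phi j.
    rewrite /im; case: arg_minP => //= j Hj Hj2; split => // l Hl; exact: Hj2.
  set mu := phi im.
  pose psi i := if 0 < phi i then phi i - mu else 0.
  have E : \sum_i delta i * phi i =
      \sum_i delta i * psi i + mu * \sum_(i | mu <= phi i) delta i.
    rewrite [X in _ = _ + mu * X]big_mkcond /= mulr_sumr -big_split /=; apply: eq_bigr => i _.
    rewrite /psi; case: (ltP 0 (phi i)) => Hp.
      by rewrite (Hmin _ Hp); ring.
    have -> : phi i = 0 by apply/eqP; rewrite eq_le Hp H0.
    by rewrite leNgt Him /=; ring.
  rewrite E; have h2 : mu * \sum_(i | mu <= phi i) delta i <= 0.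
    by rewrite pmulr_rle0 // H1.
  have Hmu : 0 < mu by [].
  have Hmin' : forall j, 0 < phi j -> mu <= phi j := Hmin.
  have Emu : mu = phi im by [].
  clearbody mu; clear E.
  suff h1 : \sum_i delta i * psi i <= 0 by lra.
  apply: IH.
  + have Hsub : [set i | 0 < psi i] \subset [set i | 0 < phi i] :\ im.
      apply/fintype.subsetP => i; rewrite !inE /psi.
      case: (ltP 0 (phi i)) => Hp; last by rewrite ltxx.
      case: (eqVneq i im) => [->|] //=; by rewrite Emu subrr ltxx.
    apply: leq_trans (subset_leq_card Hsub) _.
    move: Hk; rewrite [X in (X <= _)%N -> _](cardsD1 im) inE Him add1n ltnS //.
  + by move=> i; rewrite /psi; case: ltP => // Hp; rewrite subr_ge0 Hmin'.
  + move=> t; case: (leP t 0) => Ht.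
      rewrite (eq_bigl (fun i => t <= phi i)); first exact: H1.
      move=> i; rewrite /psi; case: ltP => Hp.
        have : mu <= phi i by exact: Hmin'.
        rewrite /= => hh; apply/idP/idP => _; lra.
      apply/idP/idP => _ //; move: (H0 i) => hh; lra.
    rewrite (eq_bigl (fun i => t + mu <= phi i)); first exact: H1.
    move=> i; rewrite /psi; case: ltP => Hp /=.
      apply/idP/idP => hh; lra.
    apply/idP/idP => hh; lra.
Qed.


Section Market.
Variable R : realType.
Variables n m T : nat.
Variables (s : 'I_m -> 'I_T -> R) (S : 'I_m -> R).
Variables (v : 'I_n -> 'I_m -> R) (d : 'I_n -> 'I_T -> R).
Hypothesis hv : forall i j, v i j = 0 \/ v i j = 1.

Local Notation alloc := (alloc R n m T).
Local Notation u := (utility v d).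
Local Notation feas := (feasible s S).

Definition ind (a : 'I_n) (j : 'I_m) (tau : 'I_T) : alloc :=
  fun i j' t => ((i == a) && (j' == j) && (t == tau))%:R.
Definition addc (x : alloc) (c : R) a j tau : alloc :=
  fun i j' t => x i j' t + c * ind a j tau i j' t.

Lemma sum_ind_t (c : R) a j tau i j' :
  \sum_(t < T) c * ind a j tau i j' t = if (i == a) && (j' == j) then c else 0.
Proof.
rewrite /ind; case: ifP => H.
  rewrite (bigD1 tau) //= !eqxx mulr1 big1 ?addr0 // => t /negbTE ->.
  by rewrite mulr0.
by rewrite big1 // => t _; rewrite mulr0.
Qed.

Lemma util_addc x c a j tau i :
  u (addc x c a j tau) i = u x i + (if i == a then c * v a j else 0).
Proof.
rewrite /utility /addc.
under eq_bigr => j' _ do rewrite big_split /= sum_ind_t mulrDr.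
rewrite big_split /=.
case: (eqVneq i a) => [->|ne].
  have -> : \sum_(i0 < m) v a i0 * (if true && (i0 == j) then c else 0) = c * v a j.
    rewrite (bigD1 j) //= eqxx mulrC big1 ?addr0 // => j' /negbTE ->.
    by rewrite mulr0.
  by lra.
have -> : \sum_(i0 < m) v i i0 * (if false && (i0 == j) then c else 0) = 0.
  by rewrite big1 // => j' _; rewrite mulr0.
by lra.
Qed.

Lemma psum_addc x c a j tau j' t :
  \sum_(i < n) addc x c a j tau i j' t =
  \sum_(i < n) x i j' t + (if (j' == j) && (t == tau) then c else 0).
Proof.
rewrite /addc big_split /=; congr (_ + _); rewrite /ind.
case: ifP => H.
  move/andP: H => [/eqP Hj /eqP Ht]; subst j' t.
  rewrite (bigD1 a) //= !eqxx /= mulr1 big1 ?addr0 // => i /negbTE ->.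
  by rewrite mulr0.
rewrite big1 // => i _; case: (i == a) => /=; by rewrite -?andbA ?H mulr0.
Qed.

Lemma qsum_addc x c a j tau j' :
  \sum_(t < T) \sum_(i < n) addc x c a j tau i j' t =
  \sum_(t < T) \sum_(i < n) x i j' t + (if j' == j then c else 0).
Proof.
under eq_bigr => t _ do rewrite psum_addc.
rewrite big_split /=; congr (_ + _).
case: (eqVneq j' j) => [Hj|ne] /=.
  subst j'; rewrite (bigD1 tau) //= !eqxx big1 ?addr0 // => t /negbTE -> //.
by rewrite big1.
Qed.

Lemma feasA x a j tau eta : feas x -> 0 <= eta ->
  \sum_i x i j tau + eta <= s j tau ->
  \sum_t \sum_i x i j t + eta <= S j -> feas (addc x eta a j tau).
Proof.
move=> [H0 [H1 H2]] He Hp Hq; split; [|split].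
- move=> i j' t; rewrite /addc /ind; have := H0 i j' t; case: (_ && _) => /=; lra.
- move=> j' t; rewrite psum_addc; have := H1 j' t.
  case: (eqVneq j' j) => [->|] /=; last lra.
  case: (eqVneq t tau) => [->|] /=; lra.
- move=> j'; rewrite qsum_addc; have := H2 j'.
  case: (eqVneq j' j) => [->|] /=; lra.
Qed.

Lemma feasB x a b j tau tau' eta : feas x -> 0 <= eta -> eta <= x b j tau' ->
  (tau' = tau \/ \sum_i x i j tau + eta <= s j tau) ->
  feas (addc (addc x eta a j tau) (- eta) b j tau').
Proof.
move=> [H0 [H1 H2]] He Hb Hc; split; [|split].
- move=> i j' t; rewrite /addc /ind; have := H0 i j' t.
  case: (eqVneq i b) => [->|] /=; last by case: (_ && _) => /=; lra.
  case: (eqVneq j' j) => [->|] /=; last by rewrite !andbF /=; lra.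
  case: (eqVneq t tau') => [->|] /=; last by case: (_ && _) => /=; lra.
  by case: (_ && _) => /=; lra.
- move=> j' t; rewrite !psum_addc; have := H1 j' t.
  case: (eqVneq j' j) => [->|] /=; last lra.
  case: (eqVneq t tau) => [->|ne] /=.
    case: Hc => [->|]; first by rewrite eqxx; lra.
    by case: (_ == _); lra.
  by case: (_ == _); lra.
- move=> j'; rewrite !qsum_addc; have := H2 j'.
  by case: (eqVneq j' j) => [->|] /=; lra.
Qed.


Lemma sumL_decomp (L : {set 'I_n}) (f : alloc) :
  \sum_(i in L) u f i =
  \sum_(j < m) \sum_(t < T) \sum_(i in L) v i j * f i j t
  - \sum_(i in L) total_demand d i.
Proof.
rewrite /utility sumrB; congr (_ - _).
rewrite exchange_big /=; apply: eq_bigr => j _.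
under eq_bigr => i _ do rewrite mulr_sumr.
by rewrite exchange_big.
Qed.

Lemma sumL_le (L : {set 'I_n}) (f : alloc) j t : feas f ->
  \sum_(i in L) v i j * f i j t <= \sum_i f i j t.
Proof.
move=> [H0 _].
rewrite [X in _ <= X](bigID (mem L)) /=.
have h1 : \sum_(i in L) v i j * f i j t <= \sum_(i in L) f i j t.
  apply: ler_sum => i _; have := H0 i j t; case: (hv i j) => ->; lra.
have h2 : 0 <= \sum_(i | i \notin L) f i j t by apply: sumr_ge0 => i _.
lra.
Qed.

Lemma sumL_eq (L : {set 'I_n}) (x : alloc) j t : feas x ->
  (forall i, 0 < x i j t -> i \in L /\ v i j = 1) ->
  \sum_(i in L) v i j * x i j t = \sum_i x i j t.
Proof.
move=> [H0 _] H.
rewrite [RHS](bigID (mem L)) /= [X in _ = _ + X]big1 ?addr0.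
  apply: eq_bigr => i Hi; case: (ltP 0 (x i j t)) => h.
    by have [_ ->] := H i h; rewrite mul1r.
  have -> : x i j t = 0 by apply/eqP; rewrite eq_le h H0.
  by rewrite mulr0.
move=> i Hi; case: (ltP 0 (x i j t)) => h.
  by have [h1 _] := H i h; rewrite h1 in Hi.
by apply/eqP; rewrite eq_le h H0.
Qed.

Lemma CL (x y : alloc) (L : {set 'I_n}) : feas x -> feas y ->
  \sum_(i in L) u x i < \sum_(i in L) u y i ->
  exists a b (k : R), [/\ a \in L, 0 < k & forall eta, 0 < eta -> eta <= k ->
    exists z, [/\ feas z, u z a = u x a + eta &
      forall i, i != a -> u z i = u x i \/ [/\ i = b, i \notin L & u x i - eta <= u z i]]].
Proof.
move=> Fx Fy Hlt; apply: contrapT => Hno.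
have Good : forall a b k, a \in L -> 0 < k -> (forall eta, 0 < eta -> eta <= k ->
    exists z, [/\ feas z, u z a = u x a + eta &
      forall i, i != a -> u z i = u x i \/ [/\ i = b, i \notin L & u x i - eta <= u z i]]) -> False.
  by move=> a b k Ha Hk H; apply: Hno; exists a, b, k; split.
have F1 : forall a j tau, a \in L -> v a j = 1 -> \sum_i x i j tau < s j tau ->
    \sum_t \sum_i x i j t < S j -> False.
  move=> a j tau Ha Hv Hp Hq.
  apply: (Good a a (Num.min (s j tau - \sum_i x i j tau) (S j - \sum_t \sum_i x i j t))) => //.
    by rewrite lt_min !subr_gt0 Hp Hq.
  move=> eta He Hk; exists (addc x eta a j tau); split.
  - move: Hk; rewrite le_min => /andP [h1 h2].
    apply: feasA => //; [exact: ltW | lra | lra].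
  - by rewrite util_addc eqxx Hv mulr1.
  - by move=> i ne; left; rewrite util_addc (negbTE ne) addr0.
have FB : forall a b j tau tau', a \in L -> v a j = 1 -> 0 < x b j tau' ->
    (tau' = tau \/ \sum_i x i j tau < s j tau) -> (b \notin L \/ v b j = 0) -> False.
  move=> a b j tau tau' Ha Hv Hx Hc Hb.
  have ab : a != b.
    apply/eqP => E; subst b; case: Hb => [h|h]; [by rewrite Ha in h| by rewrite Hv in h; move/eqP: h; rewrite oner_eq0].
  pose k := Num.min (x b j tau') (if tau' == tau then 1 else s j tau - \sum_i x i j tau).
  apply: (Good a b k) => //.
    rewrite lt_min Hx /=; case: eqP => ne; first by rewrite ltr01.
    by case: Hc => [E|h]; [|rewrite subr_gt0].
  move=> eta He Hk; exists (addc (addc x eta a j tau) (- eta) b j tau'); split.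
  - move: Hk; rewrite le_min => /andP [h1 h2].
    apply: feasB => //; first exact: ltW.
    move: h2; case: eqP => [E _|ne h2]; first by left.
    right; lra.
  - by rewrite !util_addc eqxx (negbTE ab) Hv; lra.
  - move=> i ne; rewrite !util_addc (negbTE ne) addr0.
    case: (eqVneq i b) => [E|nb]; last by left; rewrite addr0.
    subst i; case: (hv b j) => hvb; first by left; rewrite hvb; lra.
    right; split => //; last by rewrite hvb; lra.
    by case: Hb => // h; rewrite h in hvb; move/eqP: hvb; rewrite eq_sym oner_eq0.
suff key : \sum_(i in L) u y i <= \sum_(i in L) u x i by lra.
rewrite !sumL_decomp lerD2r; rewrite ler_sum // => j _.
case: (boolP [exists a, (a \in L) && (v a j == 1)]); last first.
  move=> /existsPn Hn.
  have Z : forall f : alloc, \sum_(t < T) \sum_(i in L) v i j * f i j t = 0.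
    move=> f; apply: big1 => t _; apply: big1 => i Hi.
    case: (hv i j) => h; first by rewrite h mul0r.
    by have := Hn i; rewrite Hi h eqxx.
  by rewrite !Z.
move=> /existsP [a /andP [Ha /eqP Hv]].
case: (boolP [exists tau, \sum_i x i j tau < s j tau]).
  move=> /existsP [tau Htau].
  have HQ : S j <= \sum_t \sum_i x i j t.
    by rewrite leNgt; apply/negP => hq; exact: F1 a j tau Ha Hv Htau hq.
  have Hu : forall t i, 0 < x i j t -> i \in L /\ v i j = 1.
    move=> t i hx; case: (boolP (i \in L)) => hi; last first.
      by exfalso; apply: (FB a i j tau t Ha Hv hx (or_intror Htau) (or_introl hi)).
    case: (hv i j) => hvi; last by [].
    by exfalso; apply: (FB a i j tau t Ha Hv hx (or_intror Htau) (or_intror hvi)).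
  rewrite [X in _ <= X](eq_bigr (fun t => \sum_i x i j t)); last first.
    by move=> t _; apply: (sumL_eq L x j t Fx) => i; apply: Hu.
  apply: le_trans HQ; have Fy2 := proj2 (proj2 Fy); apply: le_trans (Fy2 j).
  by apply: ler_sum => t _; apply: (sumL_le L y j t Fy).
move=> /existsPn Hns; apply: ler_sum => t _.
rewrite (sumL_eq L x j t Fx); last first.
  move=> i hx; case: (boolP (i \in L)) => hi; last first.
    by exfalso; apply: (FB a i j t t Ha Hv hx (or_introl erefl) (or_introl hi)).
  case: (hv i j) => hvi; last by [].
  by exfalso; apply: (FB a i j t t Ha Hv hx (or_introl erefl) (or_intror hvi)).
apply: le_trans (sumL_le L y j t Fy) _.
case: Fy => _ [Fy1 _]; apply: le_trans (Fy1 j t) _.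
by have := Hns t; rewrite -leNgt.
Qed.



Definition LT (x : alloc) := feas x /\ forall c (y : alloc), feas y ->
  \sum_(i in [set i | u x i <= c]) u y i <= \sum_(i in [set i | u x i <= c]) u x i.

Lemma lex_LT x : leximin_optimal s S v d x -> LT x.
Proof.
move=> [Fx Hopt]; split=> // c y Fy; rewrite leNgt; apply/negP => Hlt.
have [a [b [k [Ha Hk Hmove]]]] := CL _ _ _ Fx Fy Hlt.
have Hac : u x a <= c by move: Ha; rewrite inE.
pose g := if b \in [set i | u x i <= c] then 1 else (u x b - u x a) / 2.
have Hg : 0 < g.
  rewrite /g; case: ifP => hb //; move/negbT: hb; rewrite inE -ltNge => hb; lra.
set eta := Num.min k g.
have He : 0 < eta by rewrite lt_min Hk Hg.
have Hek : eta <= k by rewrite ge_min lexx.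
have Heg : eta <= g by rewrite ge_min lexx orbT.
have [z [Fz Hza Hzi]] := Hmove eta He Hek.
apply: (Hopt z Fz); apply: (@LexUp _ _ _ _ a); first by rewrite Hza; lra.
move=> i ne; case: (Hzi i ne) => [->|[E hb hz]]; [by left | right].
subst i; move: Heg; rewrite /g (negbTE hb) => Heg.
move: hb; rewrite inE -ltNge => hb; split; lra.
Qed.

Lemma MNW_LT x : max_nash_welfare s S v d x -> LT x.
Proof.
move=> [Fx [Hpos Hopt]]; split=> // c y Fy; rewrite leNgt; apply/negP => Hlt.
have [a [b [k [Ha Hk Hmove]]]] := CL _ _ _ Fx Fy Hlt.
have Hac : u x a <= c by move: Ha; rewrite inE.
pose g := if b \in [set i | u x i <= c] then 1 else (u x b - u x a) / 2.
have Hg : 0 < g.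
  rewrite /g; case: ifP => hb //; move/negbT: hb; rewrite inE -ltNge => hb; lra.
set eta := Num.min k g.
have He : 0 < eta by rewrite lt_min Hk Hg.
have Hek : eta <= k by rewrite ge_min lexx.
have Heg : eta <= g by rewrite ge_min lexx orbT.
have [z [Fz Hza Hzi]] := Hmove eta He Hek.
have Hxa := Hpos a.
have Hzpos : forall i, 0 < u z i.
  move=> i; case: (eqVneq i a) => [->|ne]; first by rewrite Hza; lra.
  case: (Hzi i ne) => [->|[E hb hz]] //.
  subst i; move: Heg; rewrite /g (negbTE hb) => Heg.
  move: hb; rewrite inE -ltNge => hb; lra.
have := Hopt z Fz Hzpos; apply/negP; rewrite -ltNge.
rewrite [X in _ < X](bigD1 a) // [X in X < _](bigD1 a) //=.
case: (boolP [exists i, (i != a) && (u z i != u x i)]).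
  move=> /existsP [i /andP [ia hi]].
  case: (Hzi i ia) => [E|[E hb hz]]; first by rewrite E eqxx in hi.
  subst i.
  rewrite [X in _ < _ + X](bigD1 b) // [X in _ + X < _](bigD1 b) //=.
  rewrite [X in _ < _ + (_ + X)](eq_bigr (fun i => ln (u x i))); last first.
    move=> i /andP [ia' ib]; case: (Hzi i ia') => [->//|[E _ _]].
    by rewrite E eqxx in ib.
  move: Heg; rewrite /g (negbTE hb) => Heg.
  move: hb; rewrite inE -ltNge => hb.
  have Hxb := Hpos b.
  have Hzb := Hzpos b.
  have Hza' := Hzpos a.
  suff : ln (u x a) + ln (u x b) < ln (u z a) + ln (u z b) by lra.
  rewrite -!lnM ?posrE // ltr_ln ?posrE ?mulr_gt0 //.
  rewrite Hza.
  have h1 : (u x a + eta) * (u x b - eta) <= (u x a + eta) * u z b.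
    by apply: ler_wpM2l; lra.
  have h2 : 0 < eta * (u x b - u x a - eta) by apply: mulr_gt0; lra.
  have e : (u x a + eta) * (u x b - eta) = u x a * u x b + eta * (u x b - u x a - eta) by ring.
  lra.
move=> /existsPn hn.
rewrite [X in _ < _ + X](eq_bigr (fun i => ln (u x i))); last first.
  move=> i ia; have := hn i; rewrite ia /= negbK => /eqP -> //.
rewrite ltrD2r ltr_ln ?posrE // Hza; lra.
Qed.

Lemma LT_lex x : LT x -> forall y, feas y -> ~ leximin_gt (u y) (u x).
Proof.
move=> [Fx HL] y Fy [k [Hpre Hk]].
set c := nth 0 (sorted_vec (u x)) k.
have C1 : (Cnt (u y) c <= k)%N by rewrite -Klem.
have C2 : (k < Cnt (u x) c)%N by rewrite ltnNge -Klem // ltxx.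
have C3 : forall s0, s0 < c -> (Cnt (u y) s0 <= Cnt (u x) s0)%N.
  move=> s0 hs; set mm := Cnt (u x) s0.
  have hm : (mm <= k)%N by rewrite /mm -Klem.
  have hmn : (mm < n)%N := leq_ltn_trans hm (ltn_ord k).
  rewrite -Klem //; case: (ltnP mm k) => h.
    by have := Hpre (Ordinal hmn) h; rewrite /= => ->; rewrite Klem.
  have E : mm = k by apply/eqP; rewrite eqn_leq hm h.
  by rewrite E; exact: lt_trans hs Hk.
set L := [set i | u x i <= c].
set D := [set i in L | u y i != u x i].
case: (set_0Vmem D) => [D0|[i0 Hi0]].
  have sub : L \subset [set i | u y i <= c].
    apply/fintype.subsetP => i hi; have : i \notin D by rewrite D0 inE.
    have hi' : u x i <= c by move: hi; rewrite inE.
    rewrite !inE hi' /= negbK => /eqP -> //.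
  have := subset_leq_card sub; rewrite -/(Cnt (u x) c) -/(Cnt (u y) c) => h.
  by have := leq_ltn_trans (leq_trans h C1) C2; rewrite ltnn.
set im := [arg min_(i < i0 in D) u x i]%O.
have [HimD Hmin] : im \in D /\ forall j, j \in D -> u x im <= u x j.
  rewrite /im; case: arg_minP => //= j Hj Hj2; split => // l Hl; exact: Hj2.
set t0 := u x im.
have Himc : t0 <= c by move: HimD; rewrite !inE => /andP [].
have Himne : u y im != u x im by move: HimD; rewrite !inE => /andP [].
have Ag : forall i, u x i < t0 -> u y i = u x i.
  move=> i hi; case: (eqVneq (u y i) (u x i)) => // ne; exfalso.
  have : i \in D by rewrite !inE ne andbT; apply: ltW; exact: lt_le_trans hi Himc.
  by move/Hmin; rewrite -/t0 leNgt hi.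
have Up : forall i, u x i = t0 -> u y i != u x i -> t0 < u y i.
  move=> i e ne; rewrite ltNge; apply/negP => hle.
  have hlt : u y i < t0 by rewrite lt_neqAle hle andbT -e.
  set s0 := u y i.
  have sub : i |: [set j | u x j <= s0] \subset [set j | u y j <= s0].
    apply/fintype.subsetP => j; rewrite !inE => /orP [/eqP ->|hj]; first by [].
    by rewrite Ag //; exact: le_lt_trans hj hlt.
  have := subset_leq_card sub; rewrite cardsU1 inE -ltNge e hlt /= add1n.
  rewrite -/(Cnt (u x) s0) -/(Cnt (u y) s0) => h.
  have := C3 s0 (lt_le_trans hlt Himc).
  by move=> h2; have := leq_ltn_trans h2 h; rewrite ltnn.
have := HL t0 y Fy; apply/negP; rewrite -ltNge.
have HimL0 : im \in [set i | u x i <= t0] by rewrite inE.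
rewrite (bigD1 im) //= [X in _ < X](bigD1 im) //=.
apply: ltr_leD; first exact: Up.
apply: ler_sum => i /andP [hi _]; move: hi; rewrite inE => hi.
case: (ltP (u x i) t0) => h; first by rewrite Ag.
have e : u x i = t0 by apply/eqP; rewrite eq_le hi h.
case: (eqVneq (u y i) (u x i)) => [->//|ne].
by rewrite e; apply: ltW; apply: Up.
Qed.

Lemma ln_le_sub (z : R) : 0 < z -> ln z <= z - 1.
Proof.
move=> hz; have h : -1 < z - 1 by lra.
by have := le_ln1Dx h; rewrite addrC subrK.
Qed.

Lemma LT_MNW x : LT x -> (exists y : alloc, feas y /\ forall i, 0 < u y i) ->
  max_nash_welfare s S v d x.
Proof.
move=> [Fx HL] [y0 [Fy0 Hy0]].
have Hpos : forall i, 0 < u x i.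
  move=> a; rewrite ltNge; apply/negP => ha.
  have := HL (u x a) y0 Fy0; apply/negP; rewrite -ltNge.
  have h1 : \sum_(i in [set i | u x i <= u x a]) u x i <= 0.
    rewrite [X in _ <= X](_ : 0 = \sum_(i in [set i | u x i <= u x a]) (0:R)); last by rewrite big1.
    apply: ler_sum => i; rewrite inE => hi; exact: le_trans hi ha.
  have h2 : 0 < \sum_(i in [set i | u x i <= u x a]) u y0 i.
    rewrite (bigD1 a) ?inE //=.
    have h3 : 0 <= \sum_(i in [set i | u x i <= u x a] | i != a) u y0 i.
      by apply: sumr_ge0 => i _; apply: ltW.
    have := Hy0 a; lra.
  lra.
split => //; split => // y Fy Hy.
have step : \sum_i ln (u y i) - \sum_i ln (u x i) <=
    \sum_i (u y i - u x i) * (u x i)^-1.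
  rewrite -sumrB; apply: ler_sum => i _.
  have hx := Hpos i; have hy := Hy i.
  rewrite -ln_div ?posrE //.
  have e : (u y i - u x i) * (u x i)^-1 = u y i / u x i - 1.
    by rewrite mulrBl mulfV // gt_eqF.
  rewrite e; apply: ln_le_sub; exact: divr_gt0.
have W : \sum_i (u y i - u x i) * (u x i)^-1 <= 0.
  apply: Wlem.
    by move=> i; rewrite invr_ge0; apply: ltW.
  move=> t; case: (leP t 0) => ht.
    rewrite (eq_bigl (fun i => i \in [set i | u x i <= \sum_j u x j])); last first.
      move=> i; rewrite inE.
      have h1 : t <= (u x i)^-1 by apply: le_trans ht _; rewrite invr_ge0; apply: ltW; exact: Hpos.
      have h2 : u x i <= \sum_j u x j.
        rewrite (bigD1 i) //= lerDl; apply: sumr_ge0 => j _; apply: ltW; exact: Hpos.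
      by apply/idP/idP => _.
    by rewrite sumrB; have := HL (\sum_j u x j) y Fy; lra.
  rewrite (eq_bigl (fun i => i \in [set i | u x i <= t^-1])); last first.
    by move=> i; rewrite inE invf_pge ?posrE.
  by rewrite sumrB; have := HL t^-1 y Fy; lra.
lra.
Qed.

End Market.

Theorem theorem4 (R : realType) (n m T : nat)
  (s : 'I_m -> 'I_T -> R) (S : 'I_m -> R)
  (v : 'I_n -> 'I_m -> R) (d : 'I_n -> 'I_T -> R)
  (hs : forall j t, 0 <= s j t) (hS : forall j, 0 <= S j)
  (hv : forall i j, v i j = 0 \/ v i j = 1)
  (hd : forall i t, 0 <= d i t)
  (hpos : exists x : alloc R n m T, feasible s S x /\ forall i, 0 < utility v d x i) :
  forall x : alloc R n m T,
    leximin_optimal s S v d x <-> max_nash_welfare s S v d x.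
Proof.
move=> x; split => Hx.
  by apply: LT_MNW => //; apply: lex_LT.
have HL := @MNW_LT R n m T s S v d hv x Hx.
split; first by case: HL.
by move=> y Fy; exact: (@LT_lex _ _ _ _ _ _ _ _ x HL y Fy).
Qed.
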